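(* Let $G$ be a graph with no isolated vertices. For every integer $\ell$ with $\gamma_t(G)\le \ell \le \gamma_{\rm gr}^t(G)$ there is a total dominating sequence of $G$ of length $\ell$.
   Context: $\gamma_t(G)$ is the minimum size of a set $D$ such that every vertex of $G$ has a neighbor in $D$. $N(v)$ denotes the open neighborhood of $v$. A sequence $S=(v_1,\ldots,v_k)$ of distinct vertices is a legal sequence if $N(v_i)\setminus \bigcup_{j=1}^{i-1} N(v_j)\neq\emptyset$ for every $i\in\{2,\ldots,k\}$, and a total dominating sequence if moreover $\{v_1,\ldots,v_k\}$ is a total dominating set of $G$. $\gamma_{\rm gr}^t(G)$ is the maximum length of a total dominating sequence of $G$. *)

(* Defs.v *)
From mathcomp Require Import all_boot.
Set Warnings "-notation-overridden".
Set Implicit Arguments. Unset Strict Implicit. Unset Printing Implicit Defensive.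

Definition simple_graph (T : finType) (e : rel T) : Prop :=
  symmetric e /\ irreflexive e.

Definition nbhd (T : finType) (e : rel T) (v : T) : {set T} := [set u | e v u].

Definition no_isolated (T : finType) (e : rel T) : Prop :=
  forall v : T, exists u : T, e v u.

Definition total_dom (T : finType) (e : rel T) (D : {set T}) : bool :=
  [forall v : T, [exists u in D, e v u]].

(* gamma_t(G): minimum size of a total dominating set
   (#|T| is only a default, irrelevant when there are no isolated vertices) *)
Definition gamma_t (T : finType) (e : rel T) : nat :=
  \big[minn/#|T|]_(D : {set T} | total_dom e D) #|D|.

Definition legal_seq (T : finType) (e : rel T) (s : seq T) : bool :=
  uniq s &&
  [forall i : 'I_(size s),
     (0 < i) ==>
     (nbhd e (tnth (in_tuple s) i) :\:
        \bigcup_(j < size s | j < i) nbhd e (tnth (in_tuple s) j) != set0)].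

Definition total_dom_seq (T : finType) (e : rel T) (s : seq T) : bool :=
  legal_seq e s && total_dom e [set x in s].

(* gamma_gr^t(G): maximum length of a total dominating sequence
   (legal sequences are uniq, hence of length <= #|T|) *)
Definition gamma_grt (T : finType) (e : rel T) : nat :=
  \max_(k < #|T|.+1 | [exists t : k.-tuple T, total_dom_seq e t]) k.

(* Main.v *)
Require Import Defs.
From mathcomp Require Import all_boot.
Set Implicit Arguments. Unset Strict Implicit. Unset Printing Implicit Defensive.

Section Aux.
Variables (T : finType) (e : rel T).

Definition newc (d : T) (acc : seq T) : bool :=
  [exists y, e d y && ~~ has (fun x => e x y) acc].

Fixpoint Lg (acc s : seq T) : bool :=
  match s with
  | [::] => true
  | x :: s' => ((acc == [::]) || newc x acc) && Lg (rcons acc x) s'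
  end.

Lemma Lg_cat acc s1 s2 : Lg acc (s1 ++ s2) = Lg acc s1 && Lg (acc ++ s1) s2.
Proof.
elim: s1 acc => [|x s1 IH] acc /=; first by rewrite cats0.
by rewrite IH cat_rcons andbA.
Qed.

Definition Cnd (x0 : T) (t : seq T) (k : nat) : bool :=
  (0 < k) ==> newc (nth x0 t k) (take k t).

Lemma LgE x0 acc s :
  Lg acc s <-> (forall i, i < size s -> Cnd x0 (acc ++ s) (size acc + i)).
Proof.
elim: s acc => [|x s IH] acc /=; first by split.
split.
- move/andP=> [H1 H2] [|i] Hi.
  + rewrite /Cnd addn0 nth_cat ltnn subnn /= take_size_cat //.
    apply/implyP => Hp; move: H1; case: eqP => // Ha; by move: Hp; rewrite Ha.
  + have := (proj1 (IH (rcons acc x)) H2 i Hi).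
    by rewrite cat_rcons size_rcons addSn addnS.
- move=> H; apply/andP; split.
  + have := H 0 erefl; rewrite /Cnd addn0 nth_cat ltnn subnn /= take_size_cat //.
    by case: acc {H} => //= a acc.
  + apply/(IH (rcons acc x)) => i Hi.
    by rewrite cat_rcons size_rcons addSn -addnS; apply: H.
Qed.

Lemma bigcup_take s (i : nat) : i <= size s ->
  \bigcup_(j < size s | j < i) nbhd e (tnth (in_tuple s) j)
  = [set y | has (fun x => e x y) (take i s)].
Proof.
move=> Hi; apply/setP => y; rewrite inE.
apply/bigcupP/idP.
- move=> [j Hj]; rewrite inE (tnth_nth y) /= => Hy.
  apply/(has_nthP y); exists j; first by rewrite size_takel.
  by rewrite nth_take.
- move/(has_nthP y) => [j]; rewrite size_takel // => Hj.
  rewrite nth_take // => Hy.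
  have Hj' : j < size s by apply: leq_trans Hi.
  exists (Ordinal Hj') => //.
  by rewrite inE (tnth_nth y).
Qed.

Lemma legalE s : legal_seq e s = uniq s && Lg [::] s.
Proof.
rewrite /legal_seq; congr (_ && _).
case: s => [|x0 s']; first by apply/forallP => -[].
set s := x0 :: s'.
apply/idP/idP.
- move/forallP => H; apply/(LgE x0) => i Hi; rewrite /Cnd /= add0n.
  have := H (Ordinal Hi); rewrite /= (@bigcup_take s i); last by apply: ltnW.
  rewrite (tnth_nth x0) /=.
  move/implyP=> H1; apply/implyP => /H1 /set0Pn [y]; rewrite !inE => /andP[H2 H3].
  by apply/existsP; exists y; rewrite H3 H2.
- move/(LgE x0) => H; apply/forallP => i.
  have := H i (ltn_ord i); rewrite /Cnd /= add0n (@bigcup_take s i); last by apply: ltnW.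
  rewrite (tnth_nth x0) /=.
  move/implyP=> H1; apply/implyP => /H1 /existsP [y] /andP[H2 H3].
  by apply/set0Pn; exists y; rewrite !inE H2 H3.
Qed.

Fixpoint gr (acc ds : seq T) : seq T :=
  match ds with
  | [::] => [::]
  | d :: ds' => if newc d acc then d :: gr (rcons acc d) ds' else gr acc ds'
  end.

Lemma newc_notin d acc : newc d acc -> d \notin acc.
Proof.
move/existsP=> [y /andP[Hy Hn]]; apply/negP => Hd.
by move/negP: Hn; apply; apply/hasP; exists d.
Qed.

Lemma gr_legal acc ds : uniq acc -> Lg [::] acc ->
  uniq (acc ++ gr acc ds) && Lg [::] (acc ++ gr acc ds).
Proof.
elim: ds acc => [|d ds IH] acc Hu Hl /=; first by rewrite cats0 Hu Hl.
case: ifP => Hc; last exact: IH.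
rewrite -cat_rcons; apply: IH.
- by rewrite rcons_uniq Hu newc_notin.
- by rewrite -cats1 Lg_cat Hl /= Hc orbT.
Qed.

Lemma gr_size acc ds : size (gr acc ds) <= size ds.
Proof.
elim: ds acc => [|d ds IH] acc //=; case: ifP => _ /=.
  by rewrite ltnS.
by apply: leqW.
Qed.

Lemma gr_cov acc ds d y : d \in ds -> e d y ->
  has (fun x => e x y) (acc ++ gr acc ds).
Proof.
elim: ds acc => [|d' ds IH] acc //=; rewrite inE => /orP[/eqP -> | Hin] Hy.
- case: ifP => Hc.
    by rewrite -cat_rcons has_cat has_rcons Hy.
  rewrite has_cat; apply/orP; left.
  move/negbT: Hc; rewrite /newc negb_exists => /forallP/(_ y).
  by rewrite Hy /= negbK.
- case: ifP => Hc; last exact: IH.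
  by rewrite -cat_rcons; apply: IH.
Qed.

Lemma gr_mono ds acc1 acc2 :
  (forall y, has (fun x => e x y) acc1 -> has (fun x => e x y) acc2) ->
  size (gr acc2 ds) <= size (gr acc1 ds).
Proof.
elim: ds acc1 acc2 => [|d ds IH] acc1 acc2 Hs //=.
have Himp : newc d acc2 -> newc d acc1.
  move/existsP=> [y /andP[H1 H2]]; apply/existsP; exists y; rewrite H1 /=.
  by apply/negP => /Hs; apply/negP.
case: ifP => H2; case: ifP => H1 /=.
- rewrite ltnS; apply: IH => y; rewrite !has_rcons => /orP[->//|/Hs ->];
  by rewrite orbT.
- by rewrite (Himp H2) in H1.
- apply: leqW; apply: IH => y; rewrite has_rcons => /orP[Hy|/Hs //].
  move/negbT: H2; rewrite /newc negb_exists => /forallP/(_ y).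
  by rewrite Hy /= negbK.
- exact: IH.
Qed.

End Aux.

Lemma ivt (f : nat -> nat) (l : nat) :
  (forall i, f i.+1 <= (f i).+1) ->
  forall n, f 0 <= l -> l <= f n -> exists2 i, i <= n & f i = l.
Proof.
move=> Hf; elim=> [|n IH] H0 Hn.
  by exists 0 => //; apply/eqP; rewrite eqn_leq Hn H0.
case: (leqP l (f n)) => Hl.
  by case: (IH H0 Hl) => i Hi Hfi; exists i => //; apply: leqW.
exists n.+1 => //; apply/eqP; rewrite eqn_leq Hn andbT.
exact: leq_trans (Hf n) Hl.
Qed.

Theorem mainTheorem17 (T : finType) (e : rel T) :
  simple_graph e -> no_isolated e ->
  forall l : nat, gamma_t e <= l <= gamma_grt e ->
  exists s : seq T, total_dom_seq e s /\ size s = l.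
Proof.
move=> [Hsym Hirr] Hni l /andP[Hl1 Hl2].
have HT : total_dom e setT.
  apply/forallP=> v; case: (Hni v) => u Hu; apply/existsP; exists u.
  by rewrite in_setT.
case: (arg_minnP (fun D : {set T} => #|D|) HT) => D0 HD0 HD0min.
have HgD : #|D0| <= gamma_t e.
  rewrite /gamma_t; apply: (big_ind (fun x => #|D0| <= x)).
  - exact: max_card.
  - by move=> x y Hx Hy; rewrite leq_min Hx Hy.
  - by move=> D HD; exact: HD0min.
set ds := enum D0.
have Hdom : forall acc, total_dom e [set x in acc ++ gr e acc ds].
  move=> acc; apply/forallP=> v.
  have /existsP [d /andP[Hd Hvd]] := forallP HD0 v.
  have := @gr_cov T e acc ds d v; rewrite mem_enum Hsym => /(_ Hd Hvd).
  move/hasP=> [u Hu Huv]; apply/existsP; exists u; by rewrite inE Hu Hsym.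
have Hleg : forall acc, legal_seq e acc ->
    total_dom_seq e (acc ++ gr e acc ds).
  move=> acc; rewrite /total_dom_seq Hdom andbT !legalE => /andP[Hu Hl].
  exact: gr_legal.
set A := (fun k : 'I_#|T|.+1 => [exists t : k.-tuple T, total_dom_seq e t]).
have Hs0 : total_dom_seq e ([::] ++ gr e [::] ds) by apply: Hleg; rewrite legalE.
set s0 := [::] ++ gr e [::] ds in Hs0.
have Hsz : size s0 < #|T|.+1.
  move: Hs0; rewrite /total_dom_seq legalE => /andP[/andP[Hu _] _].
  by rewrite ltnS -(card_uniqP Hu) max_card.
have Hcard : 0 < #|A|.
  apply/card_gt0P; exists (Ordinal Hsz); rewrite unfold_in /A /=.
  by apply/existsP; exists (in_tuple s0).
have [k Hk Heq] := eq_bigmax_cond (fun k : 'I_#|T|.+1 => nat_of_ord k) Hcard.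
have Hg : gamma_grt e = k by rewrite /gamma_grt; exact: Heq.
move: Hk; rewrite unfold_in /A => /existsP [t Ht].
set S : seq T := val t.
have HS : size S = k by rewrite size_tuple.
pose f i := i + size (gr e (take i S) ds).
have Hf : forall i, f i.+1 <= (f i).+1.
  move=> i; rewrite /f addSn ltnS leq_add2l; apply: gr_mono => y.
  by rewrite -addn1 takeD has_cat => ->.
have Hf0 : f 0 <= l.
  rewrite /f add0n; apply: leq_trans (gr_size _ _ _) _.
  by rewrite -cardE; apply: leq_trans HgD Hl1.
have HfS : l <= f (size S).
  by rewrite /f HS -Hg; apply: leq_trans Hl2 (leq_addr _ _).
have [i Hi Hfi] := ivt Hf Hf0 HfS.
exists (take i S ++ gr e (take i S) ds); split.
- apply: Hleg; move: Ht; rewrite /total_dom_seq !legalE => /andP[/andP[Hu HL] _].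
  rewrite take_uniq //=.
  have : Lg e [::] (take i S ++ drop i S) by rewrite cat_take_drop.
  by rewrite Lg_cat => /andP[].
- by rewrite size_cat size_takel.
Qed.
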